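(* Let $G(n,n_1,\dots,n_L,p_1,\dots,p_L)$ be a multi-layer stochastic block model network satisfying the standing assumptions below, let $\mathcal{L}$ be its set of layers, fix a target layer $l^*\in\mathcal{L}$ and let $\mathcal{L}'=\mathcal{L}\setminus\{l^*\}$. If a suitable reducing method is applied to all communities of the layers in $\mathcal{L}'$, then the (expected) modularity of the partition $l^*$ increases.
   Context: Multi-layer stochastic block model $G(n,n_1,\dots,n_L,p_1,\dots,p_L)$: a random graph on $n$ nodes with $L$ layers. For each layer $l$ the nodes are partitioned into $n_l$ planted communities of size $s_l=n/n_l$; independently for each layer, each pair of nodes in a common community of layer $l$ receives an edge from layer $l$ with probability $p_l$; the graph is the simple union of all generated edges. The layers' partitions are independent, a pair of nodes lying in a common community of layer $l$ with probability $1/n_l$ independently over layers (self-pairs allowed for convenience); for $k\ge2$ distinct layers and one community from each, the intersection has $n/(n_{l_1}\cdots n_{l_k})$ nodes in expectation. Standing assumptions: $n_l\ge4$, $p_l\in[0.05,1]$, $n\ge2\prod_l n_l$. Notation: for $T\subseteq\mathcal{L}$, $P(T)=1-\prod_{l\in T}(1-p_l)$ is the probability that some layer in $T$ generates an edge on a pair internal to all layers of $T$ (with $P(\emptyset)=0$). A reducing method applied to the layers of $\mathcal{L}'$ is described by $K:2^{\mathcal{L}'}\to[0,1]$, where $K(T)$ is the probability that an edge on a pair of nodes internal to exactly the layers $T$ among $\mathcal{L}'$ is kept; it is called suitable if for all $T,T'\subseteq\mathcal{L}'$, $P(T)\le P(T')$ implies $K(T)\ge K(T')$. Modularity of layer $l^*$: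 with $e$ edges, $Q=\sum_i\big(\frac{e^i_{in}}{e}-(\frac{d^i}{2e})^2\big)$ over communities $i$ of $l^*$, $e^i_{in}$ the internal edges, $e^i_{out}$ the edges with exactly one endpoint in $i$, $d^i=2e^i_{in}+e^i_{out}$, all counts replaced by their expected values. *)

(* Defs.v *)
From HB Require Import structures.
From mathcomp Require Import all_boot all_order all_algebra.
Set Implicit Arguments. Unset Strict Implicit. Unset Printing Implicit Defensive.
Import Order.TTheory GRing.Theory Num.Theory.
Local Open Scope ring_scope.

Section MLSBM.
Variables (R : realFieldType) (Lay : finType).

Definition Pedge (p : Lay -> R) (T : {set Lay}) : R :=
  1 - \prod_(l in T) (1 - p l).

Definition reducing_method (Lp : {set Lay}) (K : {set Lay} -> R) : Prop :=
  forall T : {set Lay}, T \subset Lp -> 0 <= K T <= 1.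

Definition suitable (p : Lay -> R) (Lp : {set Lay}) (K : {set Lay} -> R) : Prop :=
  forall T T' : {set Lay}, T \subset Lp -> T' \subset Lp ->
    Pedge p T <= Pedge p T' -> K T' <= K T.

(* Probability that a pair of nodes lies in a common community of exactly the
   layers T among the layers U (independent layers, probability 1/n_l each). *)
Definition layer_wt (nl : Lay -> nat) (U T : {set Lay}) : R :=
  (\prod_(l in T) ((nl l)%:R)^-1) * \prod_(l in U :\: T) (1 - ((nl l)%:R)^-1).

(* Expected (kept) edge indicator of a pair which is internal (inside = true)
   resp. not internal (inside = false) to the target layer lstar; the other
   layers Lp = L \ {lstar} are random, K applied to the exact set T of layers of
   Lp to which the pair is internal. *)
Definition edge_exp (nl : Lay -> nat) (p : Lay -> R) (lstar : Lay)
    (K : {set Lay} -> R) (inside : bool) : R :=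
  let Lp := [set: Lay] :\ lstar in
  \sum_(T : {set Lay} | T \subset Lp)
     layer_wt nl Lp T * Pedge p (if inside then lstar |: T else T) * K T.

(* Modularity of a partition into k communities, from (expected) counts
   e_in^i and e_out^i; e = total number of edges = sum e_in + (sum e_out)/2,
   d^i = 2 e_in^i + e_out^i. *)
Definition modularity (k : nat) (ein eout : 'I_k -> R) : R :=
  let e := \sum_(i < k) ein i + (\sum_(i < k) eout i) / 2%:R in
  \sum_(i < k) (ein i / e - ((2%:R * ein i + eout i) / (2%:R * e)) ^+ 2).

(* Community i of lstar has size s = n / n_lstar;
   it contains s^2/2 node pairs (self-pairs allowed) and s(n-s) pairs with
   exactly one endpoint in it. *)
Definition sbm_modularity (n : nat) (nl : Lay -> nat) (p : Lay -> R)
    (lstar : Lay) (K : {set Lay} -> R) : R :=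
  let s : R := n%:R / (nl lstar)%:R in
  modularity (k := nl lstar)
    (fun _ => s ^+ 2 / 2%:R * edge_exp nl p lstar K true)
    (fun _ => s * (n%:R - s) * edge_exp nl p lstar K false).

End MLSBM.

(* Main.v *)
Require Import Defs.
From HB Require Import structures.
From mathcomp Require Import all_boot all_order all_algebra.
From mathcomp Require Import ring lra.
Import Order.TTheory GRing.Theory Num.Theory.
Local Open Scope ring_scope.

Lemma modE (R : realFieldType) (k : nat) (s c a b : R) : (0 < k)%N -> 0 < s -> 0 < c -> 0 < a -> 0 <= b ->
 modularity (k:=k) (fun _ => s ^+ 2 / 2%:R * a) (fun _ => s * c * b) = s * a / (s * a + c * b) - k%:R^-1.
Proof.
move=> k0 s0 c0 a0 b0.
have k0' : (k%:R : R) != 0 by rewrite pnatr_eq0 -lt0n.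
have sa : s * a + c * b != 0.
  by apply/lt0r_neq0; apply: ltr_wpDr; [exact: mulr_ge0 (ltW c0) b0 | exact: mulr_gt0].
rewrite /modularity.
have E1 : \sum_(i < k) (s ^+ 2 / 2%:R * a) = s^+2/2%:R*a * k%:R by rewrite sumr_const card_ord mulr_natr.
have E2 : \sum_(i < k) (s * c * b) = s * c * b * k%:R by rewrite sumr_const card_ord mulr_natr.
rewrite E1 E2 sumr_const card_ord -[_ *+ k]mulr_natr.
have s0' : s != 0 by rewrite gt_eqF.
have t0 : (2%:R : R) != 0 by rewrite pnatr_eq0.
have ee : s ^+ 2 / 2%:R * a * k%:R + s * c * b * k%:R / 2%:R = s * k%:R / 2%:R * (s * a + c * b) by field.
rewrite ee.
field. by rewrite k0' sa s0'.
Qed.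

Lemma frac_le (R : realFieldType) (x1 d1 x2 d2 : R): 0<d1 -> 0<d2 -> x1*d2 <= x2*d1 -> x1/d1 <= x2/d2.
Proof. move=> h1 h2 h. rewrite ler_pdivrMr // mulrAC ler_pdivlMr //. Qed.

Lemma cheb (R : realFieldType) (I : finType) (P : pred I) (w K g : I -> R) :
 (forall i, P i -> 0 <= w i) -> (forall i j, P i -> P j -> (K i - K j)*(g i - g j) <= 0) ->
 (\sum_(i | P i) w i) * (\sum_(i | P i) w i * g i * K i) <= (\sum_(i | P i) w i * K i) * (\sum_(i | P i) w i * g i).
Proof.
move=> w0 h.
set W := \sum_(i | P i) w i. set KG := \sum_(i | P i) w i * g i * K i.
set Kw := \sum_(i | P i) w i * K i. set G := \sum_(i | P i) w i * g i.
have E : forall i, \sum_(j | P j) w i * w j * ((K i - K j)*(g i - g j)) =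
   (w i * g i * K i) * W + w i * KG - (w i * K i) * G - (w i * g i) * Kw.
  move=> i; rewrite /W /KG /G /Kw !mulr_sumr -big_split -!sumrB /=.
  by apply: eq_bigr => j _; ring.
have : \sum_(i | P i) \sum_(j | P j) w i * w j * ((K i - K j)*(g i - g j)) <= 0.
  apply: sumr_le0 => i Pi; apply: sumr_le0 => j Pj.
  rewrite -mulrA; apply: mulr_ge0_le0; first exact: w0.
  exact: mulr_ge0_le0 (w0 _ Pj) (h _ _ Pi Pj).
rewrite (eq_bigr _ (fun i _ => E i)) !sumrB big_split /= -!mulr_suml.
rewrite -/W -/KG -/Kw -/G.
move=> H; nra.
Qed.

Theorem theorem16 (R : realFieldType) (Lay : finType) (n : nat)
    (nl : Lay -> nat) (p : Lay -> R) (lstar : Lay) (K : {set Lay} -> R) :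
  (forall l, (4 <= nl l)%N) ->
  (forall l, 20%:R^-1 <= p l <= 1) ->
  (2 * \prod_(l : Lay) nl l <= n)%N ->
  reducing_method ([set: Lay] :\ lstar) K ->
  suitable p ([set: Lay] :\ lstar) K ->
  (exists T : {set Lay}, T \subset [set: Lay] :\ lstar /\ 0 < K T) ->
  sbm_modularity n nl p lstar (fun _ => 1) <= sbm_modularity n nl p lstar K.
Proof.
move=> hnl hp hn hK hs [T0 [T0s KT0]].
set Lp := [set: Lay] :\ lstar.
set w := layer_wt R nl Lp.
set g := Pedge p.
set ps := p lstar.
have nlpos : forall l, (0 < (nl l)%:R :> R).
  by move=> l; rewrite ltr0n; apply: leq_trans (hnl l).
have inv1 : forall l, ((nl l)%:R^-1 < 1 :> R).
  by move=> l; rewrite invf_lt1 // ltr1n; apply: leq_trans (hnl l).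
have w0 : forall T, 0 <= w T.
  move=> T; rewrite /w /layer_wt; apply: mulr_ge0; apply: prodr_ge0 => l _.
    by rewrite invr_ge0 ltW.
  by rewrite subr_ge0 ltW.
have wT0 : 0 < w T0.
  rewrite /w /layer_wt; apply: mulr_gt0; apply: prodr_gt0 => l _.
    by rewrite invr_gt0.
  by rewrite subr_gt0.
have hp0 : forall l, 0 <= 1 - p l <= 1.
  move=> l; have /andP[h1 h2] := hp l.
  have : 0 <= (20%:R : R)^-1 by rewrite invr_ge0 ler0n.
  move=> h3; apply/andP; split; lra.
have g0 : forall T, 0 <= g T.
  by move=> T; rewrite /g /Pedge subr_ge0; apply: prodr_ile1 => l _.
have ps0 : 0 < ps.
  have /andP[h1 _] := hp lstar.
  have : 0 < (20%:R : R)^-1 by rewrite invr_gt0 ltr0n.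
  rewrite /ps; lra.
have ps1 : ps <= 1 by have /andP[_ h2] := hp lstar.
have hf : forall T : {set Lay}, T \subset Lp -> Pedge p (lstar |: T) = ps + (1 - ps) * g T.
  move=> T hT; have nT : lstar \notin T.
    apply/negP => /(subsetP hT); by rewrite /Lp !inE eqxx.
  rewrite /Pedge big_setU1 //= /g /Pedge /ps; ring.
set W := \sum_(T : {set Lay} | T \subset Lp) w T.
set KG := \sum_(T : {set Lay} | T \subset Lp) w T * g T * K T.
set Kw := \sum_(T : {set Lay} | T \subset Lp) w T * K T.
set G := \sum_(T : {set Lay} | T \subset Lp) w T * g T.
have eKt : edge_exp nl p lstar K true = ps * Kw + (1 - ps) * KG.
  rewrite /edge_exp /= -/Lp /Kw /KG !mulr_sumr -big_split /=.
  by apply: eq_bigr => T hT; rewrite -/w hf //; ring.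
have e1t : edge_exp nl p lstar (fun _ => 1) true = ps * W + (1 - ps) * G.
  rewrite /edge_exp /= -/Lp /W /G !mulr_sumr -big_split /=.
  by apply: eq_bigr => T hT; rewrite -/w hf //; ring.
have eKf : edge_exp nl p lstar K false = KG by [].
have e1f : edge_exp nl p lstar (fun _ => 1) false = G.
  by rewrite /edge_exp /= -/Lp /G; apply: eq_bigr => T _; rewrite mulr1.
have cb : W * KG <= Kw * G.
  apply: cheb => [T _|T T' hT hT']; first exact: w0.
  case: (lerP (g T) (g T')) => hg.
    have := hs T T' hT hT' hg; nra.
  have := hs T' T hT' hT (ltW hg); nra.
have K0 : forall T : {set Lay}, T \subset Lp -> 0 <= K T.
  by move=> T hT; have /andP[] := hK T hT.
have Kwp : 0 < Kw.
  rewrite /Kw (bigD1 T0) //=; apply: ltr_wpDr; last exact: mulr_gt0.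
  by apply: sumr_ge0 => T /andP[hT _]; apply: mulr_ge0 (w0 T) (K0 T hT).
have Wp : 0 < W.
  rewrite /W (bigD1 T0) //=; apply: ltr_wpDr => //.
  by apply: sumr_ge0 => T _.
have KG0 : 0 <= KG.
  by apply: sumr_ge0 => T hT; rewrite mulr_ge0 ?K0 // mulr_ge0.
have G0 : 0 <= G by apply: sumr_ge0 => T hT; rewrite mulr_ge0.
have key : (ps * W + (1 - ps) * G) * KG <= (ps * Kw + (1 - ps) * KG) * G.
  have := ler_wpM2l (ltW ps0) cb; nra.
have aKp : 0 < ps * Kw + (1 - ps) * KG.
  apply: ltr_wpDr; [apply: mulr_ge0 => //; lra | exact: mulr_gt0].
have a1p : 0 < ps * W + (1 - ps) * G.
  apply: ltr_wpDr; [apply: mulr_ge0 => //; lra | exact: mulr_gt0].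
have k4 : (4%:R : R) <= (nl lstar)%:R by rewrite ler_nat.
have n0 : (0 < n)%N.
  apply: leq_trans hn; rewrite muln_gt0 /=; apply: prodn_gt0 => l.
  by apply: leq_trans (hnl l).
have nR : (0 : R) < n%:R by rewrite ltr0n.
have kR : (0 : R) < (nl lstar)%:R by [].
rewrite /sbm_modularity /=.
set s := n%:R / (nl lstar)%:R.
have s0 : 0 < s by apply: divr_gt0.
have c0 : 0 < n%:R - s.
  rewrite subr_gt0 /s ltr_pdivrMr //; nra.
rewrite eKt e1t eKf e1f !modE //; try exact: (leq_trans _ (hnl lstar)).
rewrite lerD2r; apply: frac_le.
- by apply: ltr_wpDr; [apply: mulr_ge0; [exact: ltW|] |exact: mulr_gt0].
- by apply: ltr_wpDr; [apply: mulr_ge0; [exact: ltW|] |exact: mulr_gt0].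
have := ler_wpM2l (mulr_ge0 (ltW s0) (ltW c0)) key; nra.
Qed.
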